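(* There exist universal constants $0<\kappa_1<\kappa_2<\infty$ and $c,C>0$ such that the following holds. Let $\{(a_i,b_i,m_i,n_i):i\in\mathbb{Z}\}$ be a positive ABMN solution with battlefield index $k$. Then there exist $A,F\in[\kappa_1,\kappa_2]$ such that for all $j\ge k$, $a_j=(m_k-m_{k-1})\cdot 2F\cdot 2^{2(j-k)}\exp\{-2\cdot 2^{j-k}A\}(1+\varepsilon^{(1)}_j)$, $b_j=(m_k-m_{k-1})\cdot 4F\cdot 2^{2(j-k)}\exp\{-3\cdot 2^{j-k}A\}(1+\varepsilon^{(2)}_j)$, $m_j-m_{j-1}=(m_k-m_{k-1})\cdot F\cdot 2^{2(j-k)}\exp\{-2^{j-k}A\}(1+\varepsilon^{(3)}_j)$, $n_{j-1}-n_j=(m_k-m_{k-1})\cdot 2F\cdot 2^{2(j-k)}\exp\{-2^{j-k+1}A\}(1+\varepsilon^{(4)}_j)$, where $|\varepsilon^{(r)}_j|\le C\exp\{-c\,2^{j-k}\}$ for $r=1,2,3,4$.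
   Context: ABMN system on $\mathbb{Z}$: real variables $a_i,b_i\ge0$, $m_i,n_i$ with, for all $i\in\mathbb{Z}$, $(a_i+b_i)(m_i+a_i)=a_im_{i+1}+b_im_{i-1}$, $(a_i+b_i)(n_i+b_i)=a_in_{i+1}+b_in_{i-1}$, $(a_i+b_i)^2=b_i(m_{i+1}-m_{i-1})$, $(a_i+b_i)^2=a_i(n_{i-1}-n_{i+1})$. A solution is positive if all $a_i,b_i>0$ (then $m_i$ is strictly increasing and $n_i$ strictly decreasing). For such a solution set $\phi_i=\frac{n_{i-1}-n_i}{m_i-m_{i-1}}$; the battlefield index is the unique $k\in\mathbb{Z}$ with $\phi_k\in(1/3,3]$. ''Universal'' means independent of the solution. *)

(* Defs.v *)
From Stdlib Require Import Reals ZArith.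
Open Scope R_scope.

Definition ABMN_solution (a b m n : Z -> R) : Prop :=
  forall i : Z,
    0 <= a i /\ 0 <= b i /\
    (a i + b i) * (m i + a i) = a i * m (i + 1)%Z + b i * m (i - 1)%Z /\
    (a i + b i) * (n i + b i) = a i * n (i + 1)%Z + b i * n (i - 1)%Z /\
    (a i + b i) ^ 2 = b i * (m (i + 1)%Z - m (i - 1)%Z) /\
    (a i + b i) ^ 2 = a i * (n (i - 1)%Z - n (i + 1)%Z).

Definition positive_ABMN_solution (a b m n : Z -> R) : Prop :=
  ABMN_solution a b m n /\ (forall i : Z, 0 < a i /\ 0 < b i).

Definition phi (m n : Z -> R) (i : Z) : R :=
  (n (i - 1)%Z - n i) / (m i - m (i - 1)%Z).

Definition in_battlefield_range (x : R) : Prop := 1 / 3 < x /\ x <= 3.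

Definition battlefield_index (m n : Z -> R) (k : Z) : Prop :=
  in_battlefield_range (phi m n k) /\
  (forall k' : Z, in_battlefield_range (phi m n k') -> k' = k).

Definition pow2Z (d : Z) : R := 2 ^ (Z.to_nat d).

(* Main.v *)
Require Import Defs.
From Stdlib Require Import Reals ZArith Lra Lia Psatz.
Open Scope R_scope.

Lemma ln_le' x y : 0 < x -> x <= y -> ln x <= ln y.
Proof. intros Hx [H|H]. left; apply ln_increasing; auto. subst; lra. Qed.

Lemma exp_le' x y : x <= y -> exp x <= exp y.
Proof. intros [H|H]. left; apply exp_increasing; auto. subst; lra. Qed.

Lemma ln_le_sub1 x : 0 < x -> ln x <= x - 1.
Proof. intros Hx. pose proof (exp_ineq1_le (ln x)). rewrite exp_ln in H; lra. Qed.

Lemma ln1p_bounds x : 0 <= x -> 0 <= ln (1 + x) <= x.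
Proof. intros Hx. split.
 - rewrite <- ln_1. apply ln_le'; lra.
 - pose proof (ln_le_sub1 (1+x)). lra. Qed.

Lemma ln2_bounds : / 2 <= ln 2 <= 1.
Proof. split. left; apply ln_lt_2. pose proof (ln_le_sub1 2). lra. Qed.

Lemma exp_sub1_bound x : Rabs (exp x - 1) <= Rabs x * exp (Rabs x).
Proof.
  pose proof (exp_ineq1_le x). pose proof (exp_ineq1_le (-x)).
  pose proof (exp_pos x).
  destruct (Rle_or_lt 0 x).
  - rewrite (Rabs_pos_eq x) by lra. rewrite Rabs_pos_eq by lra.
    rewrite exp_Ropp in H0.
    assert (exp x * (1 - x) <= 1).
    { apply (Rmult_le_reg_r (/ exp x)). apply Rinv_0_lt_compat; auto.
      rewrite Rmult_comm, <- Rmult_assoc, Rinv_l, Rmult_1_l; lra. }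
    nra.
  - rewrite (Rabs_left x) by lra. rewrite Rabs_left1.
    + assert (exp (-x) >= 1) by lra. nra.
    + assert (exp x <= exp 0) by (apply exp_le'; lra). rewrite exp_0 in H3; lra.
Qed.

Lemma mono_le (M : nat -> R) : (forall n, M n <= M (S n)) -> forall n m, (n <= m)%nat -> M n <= M m.
Proof. intros H n m Hnm. induction Hnm. lra. specialize (H m). lra. Qed.

Lemma squeeze (M N : nat -> R) :
  (forall n, M n <= M (S n)) -> (forall n, N (S n) <= N n) -> (forall n, M n <= N n) ->
  exists l, forall n, M n <= l <= N n.
Proof.
  intros HM HN HMN.
  assert (Hall : forall n j, M n <= N j).
  { intros n j. destruct (Nat.le_ge_cases n j).
    - pose proof (mono_le M HM n j H). specialize (HMN j). lra.
    - pose proof (mono_le (fun k => - N k) ltac:(intros k; specialize (HN k); lra) j n H).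
      specialize (HMN n). simpl in H0. lra. }
  destruct (completeness (fun x => exists n, x = M n)) as [l [Hub Hlub]].
  - exists (N 0%nat). intros x [n ->]. apply Hall.
  - exists (M 0%nat). exists 0%nat. reflexivity.
  - exists l. intros n. split.
    + apply Hub. exists n; reflexivity.
    + apply Hlub. intros x [m ->]. apply Hall.
Qed.
Lemma aux_ineq g a b p : 0 < p -> 0 <= a -> g <= 3 * a -> b <= a/2 ->
   g / (2 * p) + 3 * b / (2 * p) <= 3 * a / p.
Proof. intros. unfold Rdiv. rewrite Rinv_mult. pose proof (Rinv_0_lt_compat p H). 
set (q := / p) in *. clearbody q.
assert (0 <= (3*a - g) * q) by (apply Rmult_le_pos; lra).
assert (0 <= (a/2 - b) * q) by (apply Rmult_le_pos; lra).
assert (0 <= a * q) by (apply Rmult_le_pos; lra).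
lra. Qed.

Definition E (i : nat) : R := exp (- ln 2 * 2 ^ i).

Lemma E_pos i : 0 < E i.
Proof. apply exp_pos. Qed.

Lemma E_0 : E 0 = / 2.
Proof. unfold E. simpl. replace (- ln 2 * 1) with (- ln 2) by ring.
  rewrite exp_Ropp, exp_ln; lra. Qed.

Lemma E_S i : E (S i) = E i * E i.
Proof. unfold E. rewrite <- exp_plus. f_equal. simpl. ring. Qed.

Lemma E_le_half i : E i <= / 2.
Proof. induction i. rewrite E_0; lra. rewrite E_S. pose proof (E_pos i). nra. Qed.

Lemma E_S_half i : E (S i) <= E i / 2.
Proof. rewrite E_S. pose proof (E_pos i). pose proof (E_le_half i). nra. Qed.

Lemma E_mono j d : E (j + d) <= E j.
Proof. induction d. rewrite Nat.add_0_r; lra.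
  rewrite Nat.add_succ_r. pose proof (E_S_half (j+d)). pose proof (E_pos (j+d)). lra. Qed.

Lemma pow2_pos i : 0 < 2 ^ i.
Proof. apply pow_lt; lra. Qed.

Section Core.
Variables (r u : nat -> R).
Hypothesis rpos : forall i, 0 < r i.
Hypothesis Hr : forall i, ln (r (S i)) = 2 * ln (r i) - ln (1 + 2 * r (S i)) - ln (2 + r i).
Hypothesis Hu : forall i, u (S i) = u i + 2 * ln (r i) - ln (1 + 2 * r (S i)).
Hypothesis Hu0 : u 0%nat = ln (r 0%nat).
Hypothesis Hr0 : / 5 < r 0%nat <= 1.

Definition z i := ln (r i) - ln 2.
Definition g i := ln (1 + 2 * r (S i)) + ln (1 + r i / 2).

Lemma ln2p x : 0 <= x -> ln (2 + x) = ln 2 + ln (1 + x / 2).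
Proof. intros. rewrite <- ln_mult by lra. f_equal. field. Qed.

Lemma z_S i : z (S i) = 2 * z i - g i.
Proof. unfold z, g. rewrite Hr, ln2p by (left; apply rpos). ring. Qed.

Lemma g_nonneg i : 0 <= g i.
Proof. unfold g. pose proof (rpos i); pose proof (rpos (S i)).
  pose proof (ln1p_bounds (2 * r (S i))). pose proof (ln1p_bounds (r i / 2)). 
  destruct H1; try lra; destruct H2; lra. Qed.

Lemma z_bound i : z i <= - ln 2 * 2 ^ i.
Proof. induction i.
  - unfold z. simpl. assert (ln (r 0%nat) <= 0) by (rewrite <- ln_1; apply ln_le'; lra). lra.
  - rewrite z_S. pose proof (g_nonneg i). simpl. lra. Qed.

Lemma r_eq i : r i = 2 * exp (z i).
Proof. unfold z. unfold Rminus. rewrite exp_plus, exp_Ropp, !exp_ln by (try apply rpos; lra). field. Qed.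

Lemma r_bound i : r i <= 2 * E i.
Proof. rewrite r_eq. unfold E. pose proof (exp_le' _ _ (z_bound i)). lra. Qed.

Lemma g_bound i : g i <= 3 * E i.
Proof. unfold g. pose proof (rpos i); pose proof (rpos (S i)).
  pose proof (ln1p_bounds (2 * r (S i))). pose proof (ln1p_bounds (r i / 2)).
  pose proof (r_bound i); pose proof (r_bound (S i)); pose proof (E_S_half i).
  destruct H1; try lra; destruct H2; lra. Qed.

Definition Aseq n := - z n / 2 ^ n.
Definition Bseq n := Aseq n + 3 * E n / 2 ^ n.

Lemma Aseq_S n : Aseq (S n) = Aseq n + g n / 2 ^ (S n).
Proof. unfold Aseq. rewrite z_S. simpl. pose proof (pow2_pos n). field. lra. Qed.

Lemma exists_A : exists A, forall n, Aseq n <= A <= Bseq n.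
Proof.
  apply squeeze.
  - intros n. rewrite Aseq_S. pose proof (g_nonneg n). pose proof (pow2_pos (S n)).
    assert (0 <= g n / 2 ^ S n) by (apply Rle_mult_inv_pos; lra). lra.
  - intros n. unfold Bseq. rewrite Aseq_S. pose proof (g_bound n). pose proof (E_S_half n).
    pose proof (pow2_pos n). simpl. 
    pose proof (aux_ineq (g n) (E n) (E (S n)) (2 ^ n) H1 (Rlt_le _ _ (E_pos n)) H H0).
    lra.
  - intros n. unfold Bseq. pose proof (E_pos n). pose proof (pow2_pos n).
    assert (0 <= 3 * E n / 2 ^ n) by (apply Rle_mult_inv_pos; lra). lra.
Qed.

Lemma ew_bound A : (forall n, Aseq n <= A <= Bseq n) ->
  forall i, 0 <= z i + 2 ^ i * A <= 3 * E i.
Proof. intros HA i. specialize (HA i). unfold Bseq, Aseq in HA.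
  pose proof (pow2_pos i). destruct HA as [H1 H2].
  split.
  - apply (Rmult_le_compat_r (2 ^ i)) in H1; [|lra].
    unfold Rdiv in H1. rewrite Rmult_assoc, Rinv_l in H1 by lra. lra.
  - apply (Rmult_le_compat_r (2 ^ i)) in H2; [|lra].
    rewrite Rmult_plus_distr_r in H2. unfold Rdiv in H2.
    rewrite !Rmult_assoc, Rinv_l in H2 by lra. lra.
Qed.

Definition L A i := u i - 2 * INR i * ln 2 + 2 * 2 ^ i * A.

Lemma L_S A i : L A (S i) = L A i + 2 * (z i + 2 ^ i * A) - ln (1 + 2 * r (S i)).
Proof. unfold L. rewrite Hu, S_INR. unfold z. simpl. ring. Qed.

Lemma core : exists A lam, ln 2 <= A <= 7 /\ -2 <= lam <= 15 /\
  forall i, exists e1 ew, Rabs e1 <= 12 * E i /\ 0 <= ew <= 3 * E i /\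
    ln (r i) = ln 2 - 2 ^ i * A + ew /\
    u i = lam + e1 + 2 * INR i * ln 2 - 2 * 2 ^ i * A.
Proof.
  destruct exists_A as [A HA].
  pose proof (ew_bound A HA) as Hew.
  assert (HdL : forall i, - 2 * E i <= L A (S i) - L A i <= 6 * E i).
  { intros i. rewrite L_S. specialize (Hew i).
    pose proof (rpos (S i)). pose proof (ln1p_bounds (2 * r (S i))).
    pose proof (r_bound (S i)). pose proof (E_S_half i). destruct H0; lra. }
  destruct (squeeze (fun i => L A i - 4 * E i) (fun i => L A i + 12 * E i)) as [lam Hlam].
  - intros n. specialize (HdL n). pose proof (E_S_half n). lra.
  - intros n. specialize (HdL n). pose proof (E_S_half n). lra.
  - intros n. pose proof (E_pos n). lra.
  - exists A, lam.
    assert (HA0 := HA 0%nat). unfold Bseq, Aseq in HA0. unfold z in HA0.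
    rewrite E_0 in HA0. simpl in HA0.
    pose proof ln2_bounds.
    assert (Hlr : - 4 <= ln (r 0%nat) <= 0).
    { split. 
      - pose proof (ln_le_sub1 (/ r 0%nat) ltac:(apply Rinv_0_lt_compat; lra)). rewrite ln_Rinv in H0 by lra.
        assert (/ r 0%nat < 5). { rewrite <- (Rinv_inv 5). apply Rinv_lt_contravar; lra. }
        lra.
      - rewrite <- ln_1. apply ln_le'; lra. }
    replace (- (ln (r 0%nat) - ln 2) / 1) with (ln 2 - ln (r 0%nat)) in HA0 by field.
    replace (3 * / 2 / 1) with (3/2) in HA0 by field.
    split; [lra|]. 
    assert (H0 := Hlam 0%nat). simpl in H0. unfold L in H0. rewrite Hu0, E_0 in H0. simpl in H0.
    split; [lra|].
    intros i. exists (L A i - lam), (z i + 2 ^ i * A).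
    specialize (Hlam i). specialize (Hew i). pose proof (E_pos i).
    split; [apply Rabs_le; lra|]. split; [lra|]. split.
    + unfold z. ring.
    + unfold L. ring.
Qed.
End Core.

Section Eqs.
Variables (a b m n : Z -> R).
Hypothesis Hsol : positive_ABMN_solution a b m n.

Lemma E1 p : m (p + 1)%Z - m p = 2 * a p + b p.
Proof.
  destruct Hsol as [Hs Hp]. destruct (Hs p) as (_ & _ & q1 & _ & q3 & _).
  destruct (Hp p) as [ha hb].
  assert (Hz : (a p + b p) * ((m (p+1)%Z - m p) - (2 * a p + b p)) =
     (a p * m (p + 1)%Z + b p * m (p - 1)%Z - (a p + b p) * (m p + a p))
     + (b p * (m (p + 1)%Z - m (p - 1)%Z) - (a p + b p) ^ 2)) by ring.
  rewrite <- q1, <- q3 in Hz. 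
  replace ((a p + b p) * (m p + a p) - (a p + b p) * (m p + a p) +
    ((a p + b p) ^ 2 - (a p + b p) ^ 2)) with 0 in Hz by ring.
  apply Rmult_integral in Hz. destruct Hz; lra.
Qed.

Lemma E2 p : b p * (m p - m (p - 1)%Z) = a p ^ 2.
Proof.
  destruct Hsol as [Hs Hp]. destruct (Hs p) as (_ & _ & q1 & _ & q3 & _).
  replace (b p * (m p - m (p - 1)%Z)) with
    (b p * (m (p + 1)%Z - m (p - 1)%Z) - b p * (m (p + 1)%Z - m p)) by ring.
  rewrite <- q3, E1. ring.
Qed.

Lemma E3 p : n (p - 1)%Z - n p = a p + 2 * b p.
Proof.
  destruct Hsol as [Hs Hp]. destruct (Hs p) as (_ & _ & _ & q2 & _ & q4).
  destruct (Hp p) as [ha hb].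
  assert (Hz : (a p + b p) * ((n (p-1)%Z - n p) - (a p + 2 * b p)) =
     (a p * n (p + 1)%Z + b p * n (p - 1)%Z - (a p + b p) * (n p + b p))
     + (a p * (n (p - 1)%Z - n (p + 1)%Z) - (a p + b p) ^ 2)) by ring.
  rewrite <- q2, <- q4 in Hz.
  replace ((a p + b p) * (n p + b p) - (a p + b p) * (n p + b p) +
    ((a p + b p) ^ 2 - (a p + b p) ^ 2)) with 0 in Hz by ring.
  apply Rmult_integral in Hz. destruct Hz; lra.
Qed.

Lemma E4 p : a p * (n p - n (p + 1)%Z) = b p ^ 2.
Proof.
  destruct Hsol as [Hs Hp]. destruct (Hs p) as (_ & _ & _ & q2 & _ & q4).
  replace (a p * (n p - n (p + 1)%Z)) with
    (a p * (n (p - 1)%Z - n (p + 1)%Z) - a p * (n (p - 1)%Z - n p)) by ring.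
  rewrite <- q4, E3. ring.
Qed.
End Eqs.

Lemma E2' a b m n (Hsol : positive_ABMN_solution a b m n) p :
  m p - m (p - 1)%Z = a p ^ 2 / b p.
Proof. pose proof (E2 a b m n Hsol p). destruct Hsol as [_ Hp]. destruct (Hp p).
  rewrite <- H. field. apply Rgt_not_eq; auto. Qed.

Lemma Rabs_le_between' x y : Rabs x <= y -> - y <= x <= y.
Proof. intros. unfold Rabs in H. destruct (Rcase_abs x); split; Lra.lra. Qed.

Lemma alg1 x y x' y' : 0<x -> 0<y -> 0<x' -> 0<y' -> y'*(2*x+y) = x'^2 -> x*(x'+2*y') = y^2 ->
  (y'/x')*(1+2*(y'/x'))*(2+y/x) = (y/x)*(y/x).
Proof. intros. replace ((y'/x')*(1+2*(y'/x'))*(2+y/x)) with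
  ((y'*(2*x+y)) * (x*(x'+2*y')) / (x'^2 * x^2)) by (field; lra).
  rewrite H3, H4. field. lra. Qed.

Lemma alg2 x y x' y' D : 0<x -> 0<y -> 0<x' -> 0<y' -> 0 < D -> x*(x'+2*y') = y^2 ->
  x'/D*(1+2*(y'/x')) = x/D*(y/x)*(y/x).
Proof. intros. replace (x'/D*(1+2*(y'/x'))) with ((x*(x'+2*y'))/(x*D)) by (field; lra).
  rewrite H4. field. lra. Qed.

Lemma exp_decomp x y i s : exp (x + y + 2 * INR i * ln 2 - s) = exp x * exp y * (2 ^ i) ^ 2 * exp (- s).
Proof.
  replace (x + y + 2 * INR i * ln 2 - s) with (x + y + (INR i * ln 2 + (INR i * ln 2 + - s))) by ring.
  rewrite !exp_plus. rewrite <- ln_pow by lra. rewrite exp_ln by (apply pow_lt; lra). ring.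
Qed.

Lemma err_bound x Ei : Rabs x <= 16 * Ei -> Ei <= / 2 -> Rabs (exp x - 1) <= 16 * exp 8 * Ei.
Proof. intros. pose proof (exp_sub1_bound x). assert (exp (Rabs x) <= exp 8) by (apply exp_le'; lra).
  pose proof (Rabs_pos x). pose proof (exp_pos (Rabs x)).
  assert (Rabs x * exp (Rabs x) <= 16 * Ei * exp 8). { apply Rmult_le_compat; lra. }
  lra. Qed.

Ltac cb := repeat match goal with H := _ |- _ => clearbody H end.
Tactic Notation "lra" := (cb; Lra.lra).
Tactic Notation "nra" := (cb; Psatz.nra).

Theorem mainTheorem6 :
  exists kappa1 kappa2 c C : R,
    0 < kappa1 /\ kappa1 < kappa2 /\ 0 < c /\ 0 < C /\
    forall (a b m n : Z -> R) (k : Z),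
      positive_ABMN_solution a b m n ->
      battlefield_index m n k ->
      exists A F : R,
        kappa1 <= A <= kappa2 /\ kappa1 <= F <= kappa2 /\
        forall j : Z, (k <= j)%Z ->
          let D := m k - m (k - 1)%Z in
          let t := pow2Z (j - k) in
          exists e1 e2 e3 e4 : R,
            Rabs e1 <= C * exp (- c * t) /\
            Rabs e2 <= C * exp (- c * t) /\
            Rabs e3 <= C * exp (- c * t) /\
            Rabs e4 <= C * exp (- c * t) /\
            a j = D * (2 * F) * t ^ 2 * exp (- (2 * t * A)) * (1 + e1) /\
            b j = D * (4 * F) * t ^ 2 * exp (- (3 * t * A)) * (1 + e2) /\
            m j - m (j - 1)%Z = D * F * t ^ 2 * exp (- (t * A)) * (1 + e3) /\
            n (j - 1)%Z - n j = D * (2 * F) * t ^ 2 * exp (- (2 * t * A)) * (1 + e4).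
Proof.
  pose proof ln2_bounds as Hln2.
  assert (He2 : exp (-2) <= 1) by (rewrite <- exp_0; apply exp_le'; lra).
  assert (He15 : 16 <= exp 15) by (pose proof (exp_ineq1_le 15); lra).
  pose proof (exp_pos (-2)) as He2p.
  exists (exp (-2) / 2), (exp 15), (ln 2), (16 * exp 8).
  split; [lra|]. split; [lra|]. split; [lra|]. split; [pose proof (exp_pos 8); lra|].
  intros a b m n k Hsol Hbf.
  destruct Hsol as [Hs Hp] eqn:Hsol'. clear Hsol'.
  set (al := fun i : nat => a (k + Z.of_nat i)%Z).
  set (be := fun i : nat => b (k + Z.of_nat i)%Z).
  set (r := fun i : nat => be i / al i).
  set (D := m k - m (k - 1)%Z).
  set (u := fun i : nat => ln (al i / D)).
  assert (alp : forall i, 0 < al i) by (intros i; apply Hp).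
  assert (bep : forall i, 0 < be i) by (intros i; apply Hp).
  assert (rpos : forall i, 0 < r i) by (intros i; unfold r; apply Rdiv_lt_0_compat; auto).
  assert (HD : b k * D = a k ^ 2) by (apply (E2 a b m n Hsol)).
  assert (Dp : 0 < D).
  { destruct (Hp k). apply (Rmult_lt_reg_l (b k)); auto. rewrite HD. nra. }
  assert (Hidx : forall i, (k + Z.of_nat (S i))%Z = (k + Z.of_nat i + 1)%Z) by (intros; lia).
  assert (R1 : forall i, be (S i) * (2 * al i + be i) = al (S i) ^ 2).
  { intros i. unfold al, be. rewrite Hidx. rewrite <- (E1 a b m n Hsol).
    pose proof (E2 a b m n Hsol (k + Z.of_nat i + 1)%Z).
    replace (k + Z.of_nat i + 1 - 1)%Z with (k + Z.of_nat i)%Z in H by lia. exact H. }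
  assert (R2 : forall i, al i * (al (S i) + 2 * be (S i)) = be i ^ 2).
  { intros i. unfold al, be. rewrite Hidx. rewrite <- (E4 a b m n Hsol).
    pose proof (E3 a b m n Hsol (k + Z.of_nat i + 1)%Z).
    replace (k + Z.of_nat i + 1 - 1)%Z with (k + Z.of_nat i)%Z in H by lia. rewrite H. reflexivity. }
  assert (Hr : forall i, ln (r (S i)) = 2 * ln (r i) - ln (1 + 2 * r (S i)) - ln (2 + r i)).
  { intros i. pose proof (alg1 _ _ _ _ (alp i) (bep i) (alp (S i)) (bep (S i)) (R1 i) (R2 i)) as H.
    fold (r i) (r (S i)) in H. pose proof (rpos i); pose proof (rpos (S i)).
    apply (f_equal ln) in H. rewrite !ln_mult in H by (repeat (assumption || apply Rmult_lt_0_compat); lra). lra. }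
  assert (Hu : forall i, u (S i) = u i + 2 * ln (r i) - ln (1 + 2 * r (S i))).
  { intros i. pose proof (alg2 _ _ _ _ D (alp i) (bep i) (alp (S i)) (bep (S i)) Dp (R2 i)) as H.
    fold (r i) (r (S i)) in H. pose proof (rpos i); pose proof (rpos (S i)).
    pose proof (alp i); pose proof (alp (S i)).
    assert (0 < al i / D) by (apply Rdiv_lt_0_compat; lra).
    assert (0 < al (S i) / D) by (apply Rdiv_lt_0_compat; lra).
    apply (f_equal ln) in H. rewrite !ln_mult in H by (repeat (assumption || apply Rmult_lt_0_compat); lra).
    unfold u. lra. }
  assert (Hr0eq : al 0%nat / D = r 0%nat).
  { unfold r, al, be. simpl. rewrite Z.add_0_r. 
    replace D with (a k ^ 2 / b k) by (rewrite <- HD; field; apply Rgt_not_eq, Hp).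
    destruct (Hp k). field. split; lra. }
  assert (Hu0 : u 0%nat = ln (r 0%nat)) by (unfold u; rewrite Hr0eq; reflexivity).
  assert (Hr0 : / 5 < r 0%nat <= 1).
  { destruct Hbf as [[Hb1 Hb2] _]. unfold phi in Hb1, Hb2. fold D in Hb1, Hb2.
    rewrite (E3 a b m n Hsol k) in Hb1, Hb2.
    assert (Hphi : (a k + 2 * b k) / D = r 0%nat + 2 * r 0%nat ^ 2).
    { unfold r, al, be. simpl. rewrite Z.add_0_r.
      replace D with (a k ^ 2 / b k) by (rewrite <- HD; field; apply Rgt_not_eq, Hp).
      destruct (Hp k). field. split; lra. }
    rewrite Hphi in Hb1, Hb2. pose proof (rpos 0%nat). split; nra. }
  destruct (core r u rpos Hr Hu Hu0 Hr0) as (A & lam & HA & Hlam & Hcore).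
  exists A, (exp lam / 2).
  assert (exp (-2) <= exp lam) by (apply exp_le'; lra).
  assert (exp lam <= exp 15) by (apply exp_le'; lra).
  split; [lra|]. split; [lra|].
  intros j Hj D' t. 
  set (i := Z.to_nat (j - k)).
  assert (Hji : (k + Z.of_nat i)%Z = j) by (unfold i; lia).
  assert (Ht : t = 2 ^ i) by reflexivity.
  destruct (Hcore i) as (e1 & ew & He1 & Hew & Hlr & Hui).
  pose proof (r_bound r rpos Hr Hr0 i) as Hrb.
  pose proof (E_pos i) as HEp. pose proof (E_le_half i) as HEh.
  pose proof (rpos i) as Hri.
  pose proof (ln1p_bounds (2 * r i) ltac:(lra)) as Hl1.
  set (T := 2 ^ i) in *.
  set (X := exp (- (T * A))).
  assert (HX2 : exp (- (2 * T * A)) = X * X).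
  { unfold X. rewrite <- exp_plus. f_equal. ring. }
  assert (HX3 : exp (- (3 * T * A)) = X * X * X).
  { unfold X. rewrite <- !exp_plus. f_equal. ring. }
  assert (Hal : al i = D * (exp lam * exp e1 * T ^ 2 * (X * X))).
  { assert (Hal0 : al i = D * exp (u i)).
    { unfold u. rewrite exp_ln. field. lra. apply Rdiv_lt_0_compat; auto. }
    rewrite Hal0, Hui, exp_decomp, HX2. fold T. reflexivity. }
  assert (Hrx : r i = 2 * exp ew * X).
  { rewrite <- (exp_ln (r i)) by auto. rewrite Hlr. unfold X.
    replace (ln 2 - T * A + ew) with (ln 2 + (ew + - (T * A))) by ring.
    rewrite !exp_plus, exp_ln by lra. ring. }
  assert (Hbe : be i = al i * r i) by (unfold r; field; apply Rgt_not_eq, alp).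
  assert (Haj : a j = al i) by (unfold al; rewrite Hji; reflexivity).
  assert (Hbj : b j = be i) by (unfold be; rewrite Hji; reflexivity).
  assert (HDD : D' = D) by reflexivity.
  assert (Hepos : 0 < exp ew) by apply exp_pos.
  assert (HXpos : 0 < X) by apply exp_pos.
  assert (He1pos : 0 < exp e1) by apply exp_pos.
  assert (Hepl : 0 < exp lam) by apply exp_pos.
  exists (exp e1 - 1), (exp (e1 + ew) - 1), (exp (e1 - ew) - 1), (exp (e1 + ln (1 + 2 * r i)) - 1).
  rewrite Ht. fold T. change (exp (- ln 2 * T)) with (E i).
  assert (Hab : forall x, Rabs x <= 16 * E i -> Rabs (exp x - 1) <= 16 * exp 8 * E i)
    by (intros; apply err_bound; auto).
  apply Rabs_le_between' in He1.
  split; [apply Hab; apply Rabs_le; lra|].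
  split; [apply Hab; apply Rabs_le; lra|].
  split; [apply Hab; apply Rabs_le; lra|].
  split; [apply Hab; apply Rabs_le; lra|].
  rewrite HDD, HX2, HX3.
  split; [|split; [|split]].
  - rewrite Haj, Hal. replace (1 + (exp e1 - 1)) with (exp e1) by ring. field.
  - rewrite Hbj, Hbe, Hal, Hrx. rewrite exp_plus. field.
  - rewrite (E2' a b m n Hsol j). rewrite Haj, Hbj, Hbe, Hal, Hrx.
    replace (exp (e1 - ew)) with (exp e1 / exp ew) by (unfold Rminus, Rdiv; rewrite exp_plus, exp_Ropp; reflexivity). fold X. assert (0 < T) by (unfold T; apply pow_lt; lra). field. repeat split; apply Rgt_not_eq; auto.
  - rewrite (E3 a b m n Hsol j). rewrite Haj, Hbj, Hbe, Hal, exp_plus, exp_ln by lra.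
    field.
Qed.
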